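(* Let $R$ be a ring with unity and involution $*$, let $a,v\in R$, and let $m,n$ be nonnegative integers with $m+n\geq 1$. Then (1) $a$ is left invertible if and only if $a$ is left dual $(1,1)$-core invertible; (2) $a$ is left dual pseudo core invertible if and only if $a^m$ is left dual $(a^k,a^n)$-core invertible for some positive integer $k$; (3) $a$ is left dual core invertible if and only if $a^m$ is left dual $(a,a^n)$-core invertible; (4) $a$ is left dual $v$-core invertible if and only if $v$ is left dual $(a,a)$-core invertible.
   Context: Here $a^0=1$. For $a,b,c\in R$, $a$ is left dual $(b,c)$-core invertible if there exists $x\in Rc$ such that $bxab=b$ and $(xab)^*=xab$. An element $a$ is left dual pseudo core invertible if there exist $x\in R$ and a positive integer $k$ such that $a^kxa=a^k$, $(xa)^*=xa$ and $x^2a=x$; it is left dual core invertible if there exists $x\in R$ with $axa=a$, $(xa)^*=xa$ and $x^2a=x$. For $a,v\in R$, $a$ is left dual $v$-core invertible if there exists $x\in R$ such that $axva=a$, $(xva)^*=xva$ and $x^2va=x$. *)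

(* Defs.v *)
From HB Require Import structures.
From mathcomp Require Import all_boot all_order all_algebra.
Set Implicit Arguments. Unset Strict Implicit. Unset Printing Implicit Defensive.
Import GRing.Theory.
Local Open Scope ring_scope.

Definition is_involution (R : pzRingType) (star : R -> R) : Prop :=
  [/\ forall x y : R, star (x + y) = star x + star y,
      forall x y : R, star (x * y) = star y * star x
    & forall x : R, star (star x) = x].

Definition left_invertible (R : pzRingType) (a : R) : Prop :=
  exists y : R, y * a = 1.

Definition left_dual_bc_core_inv (R : pzRingType) (star : R -> R) (a b c : R) : Prop :=
  exists x : R, (exists r : R, x = r * c) /\
    b * x * a * b = b /\ star (x * a * b) = x * a * b.

Definition left_dual_pseudo_core_inv (R : pzRingType) (star : R -> R) (a : R) : Prop :=
  exists (x : R) (k : nat), (0 < k)%N /\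
    a ^+ k * x * a = a ^+ k /\ star (x * a) = x * a /\ x ^+ 2 * a = x.

Definition left_dual_core_inv (R : pzRingType) (star : R -> R) (a : R) : Prop :=
  exists x : R, a * x * a = a /\ star (x * a) = x * a /\ x ^+ 2 * a = x.

Definition left_dual_v_core_inv (R : pzRingType) (star : R -> R) (a v : R) : Prop :=
  exists x : R, a * x * v * a = a /\ star (x * v * a) = x * v * a /\ x ^+ 2 * v * a = x.

(* Main.v *)
Require Import Defs.
From HB Require Import structures.
From mathcomp Require Import all_boot all_order all_algebra.
Import GRing.Theory.
Local Open Scope ring_scope.

Lemma star1 (R : pzRingType) (star : R -> R) : is_involution star -> star 1 = 1.
Proof.
case=> _ hM hI.
have h : forall y : R, y = y * star 1.
  by move=> y; rewrite -{1}(hI y) -[star y]mul1r hM hI.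
by rewrite {1}(h 1) mul1r.
Qed.

Lemma powA (R : pzRingType) (x a : R) : x ^+ 2 * a = x ->
  forall j, x ^+ j.+1 = x ^+ j.+2 * a.
Proof.
move=> H j.
have -> : x ^+ j.+2 * a = x ^+ j * (x ^+ 2 * a) by rewrite mulrA -exprD addn2.
by rewrite H -exprSr.
Qed.

Lemma powAn (R : pzRingType) (x a : R) : x ^+ 2 * a = x ->
  forall n j, x ^+ j.+1 = x ^+ (j.+1 + n) * a ^+ n.
Proof.
move=> H; elim=> [|n IH] j; first by rewrite addn0 expr0 mulr1.
rewrite IH exprS mulrA addnS addSn -(@powA _ _ _ H) //.
Qed.

Lemma powB (R : pzRingType) (x a : R) : x ^+ 2 * a = x ->
  forall j, x ^+ j.+1 * a ^+ j.+1 = x * a.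
Proof.
move=> H; elim=> [|j IH]; first by rewrite !expr1.
by rewrite [a ^+ j.+2]exprS mulrA -(@powA _ _ _ H).
Qed.

Lemma helperB (R : pzRingType) (z w a p : R) : z = w * a -> a * p = a -> z * p = z.
Proof. by move=> -> h; rewrite -mulrA h. Qed.

Theorem theorem3p1 (R : pzRingType) (star : R -> R) (a v : R) (m n : nat) :
  is_involution star -> (1 <= m + n)%N ->
  (left_invertible a <-> left_dual_bc_core_inv star a 1 1) /\
  (left_dual_pseudo_core_inv star a <->
     exists k : nat, (0 < k)%N /\ left_dual_bc_core_inv star (a ^+ m) (a ^+ k) (a ^+ n)) /\
  (left_dual_core_inv star a <-> left_dual_bc_core_inv star (a ^+ m) a (a ^+ n)) /\
  (left_dual_v_core_inv star a v <-> left_dual_bc_core_inv star v a a).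
Proof.
move=> hinv hmn.
have [N hN] : exists N, (n + m = N.+1)%N.
  by exists (n + m).-1; rewrite prednK // addnC.
split; [|split; [|split]].
- split.
  + case=> y ya1; exists y; split; first by exists y; rewrite mulr1.
    by rewrite mul1r !mulr1 ya1; split => //; exact: (@star1 _ star).
  + by case=> x [_ [h1 h2]]; exists x; move: h1; rewrite mul1r !mulr1.
- split.
  + case=> x [k [k0 [h1 [h2 h3]]]]; case: k k0 h1 => // k' _ h1.
    exists k'.+1; split => //; exists (x ^+ (m + k').+1); split.
      by exists (x ^+ ((m + k').+1 + n)); apply: (@powAn _ _ _ h3).
    have e : x ^+ (m + k').+1 * a ^+ m * a ^+ k'.+1 = x * a.
      by rewrite -mulrA -exprD addnS (@powB _ _ _ h3).
    have e' : forall b, b * x ^+ (m + k').+1 * a ^+ m * a ^+ k'.+1 = b * (x * a).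
      by move=> b; rewrite -e !mulrA.
    by rewrite e' e !mulrA h1; split.
  + case=> k [k0 [y [[r hr] [h1 h2]]]]; case: k k0 h1 h2 => // k' _ h1 h2.
    have e : y * a ^+ (m + k') * a = y * a ^+ m * a ^+ k'.+1.
      by rewrite -mulrA -exprSr -addnS exprD mulrA.
    exists (y * a ^+ (m + k')), k'.+1; split => //.
    rewrite -mulrA e !mulrA; split => //; split => //.
    rewrite expr2 -mulrA e.
    apply: (@helperB _ _ (r * a ^+ N) (a ^+ k'.+1)); last by rewrite !mulrA.
    by rewrite hr -mulrA -!exprD -mulrA -exprD addnA hN addSnnS.
- split.
  + case=> x [h1 [h2 h3]]; exists (x ^+ m.+1); split.
      by exists (x ^+ (m.+1 + n)); apply: (@powAn _ _ _ h3).
    have e : x ^+ m.+1 * a ^+ m * a = x * a.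
      by rewrite -mulrA -exprSr (@powB _ _ _ h3).
    have e' : forall b, b * x ^+ m.+1 * a ^+ m * a = b * (x * a).
      by move=> b; rewrite -e !mulrA.
    by rewrite e' e !mulrA h1; split.
  + case=> y [[r hr] [h1 h2]]; exists (y * a ^+ m); split; first by rewrite mulrA.
    split => //; rewrite expr2 -mulrA.
    apply: (@helperB _ _ (r * a ^+ N) a); last by rewrite !mulrA.
    by rewrite hr -mulrA -exprD hN exprSr mulrA.
- split.
  + case=> x [h1 [h2 h3]]; exists x; split => //.
    by exists (x ^+ 2 * v); rewrite h3.
  + case=> y [[r hr] [h1 h2]]; exists y; split => //; split => //.
    have e : r * a * y * v * a = r * (a * y * v * a) by rewrite !mulrA.
    by rewrite expr2 {1}hr e h1 -hr.
Qed.
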